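(* Let $\Bbbk$ be a field and let $\mathscr{C}$ be a Möbius category. Let $C$ be its incidence coalgebra: the $\Bbbk$-vector space with basis the set of arrows of $\mathscr{C}$, with $\Delta(f)=\sum_{(a,b):\,b\circ a=f}a\otimes b$ and $\epsilon(f)=1$ if $f$ is an identity arrow and $\epsilon(f)=0$ otherwise. For an arrow $f$ let $\ell(f)$ be the maximal $k$ such that $f=a_k\circ\cdots\circ a_1$ with all $a_i$ non-identity arrows ($\ell(f)=0$ for identities), let $C_n$ be the span of the arrows $f$ with $\ell(f)\le n$, and $C(n)$ the span of the arrows with $\ell(f)=n$. Then: $C_0\subset C_1\subset\cdots$ is a coalgebra filtration of $C$ (i.e. $\bigcup_n C_n=C$ and $\Delta(C_n)\subset\sum_{i+j=n}C_i\otimes C_j$); $C_n=C_{n-1}\oplus C(n)$ with $C(n)\subset\operatorname{Ker}\epsilon$ for $n\geq1$; $C_0$ is spanned by the identity arrows, which are group-like; and for every arrow $f:x\to y$ with $\ell(f)=n$, the projections of $\Delta(f)$ onto $C(0)\otimes C(n)$ and $C(n)\otimes C(0)$ are $\operatorname{id}_x\otimes f$ and $f\otimes\operatorname{id}_y$ respectively. In other words, the incidence coalgebra satisfies Hypothesis II (with the arrows as combinatorial elements, $\operatorname{in}(f)=\operatorname{id}_x$ and $\operatorname{out}(f)=\operatorname{id}_y$).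
   Context: A Möbius category (in the sense of Leroux) is a category in which every arrow $f$ admits only finitely many factorisations $f=a_k\circ\cdots\circ a_1$ ($k\ge0$) into non-identity arrows $a_i$ (the empty factorisation, $k=0$, only for identities). An element $x\ne0$ of a coalgebra is group-like if $\Delta(x)=x\otimes x$. Hypothesis II for a coalgebra $C$ means: $C$ is filtered, with chosen complements $C(n)\subset\operatorname{Ker}\epsilon$ ($n\ge1$), $C(0)=C_0$, and has a basis of homogeneous ''combinatorial elements'' closed under comultiplication, such that for every combinatorial element $f$ of degree $n$ the $(0,n)$- and $(n,0)$-components of $\Delta(f)$ are $\operatorname{in}(f)\otimes f$ and $f\otimes\operatorname{out}(f)$ with $\operatorname{in}(f),\operatorname{out}(f)$ group-like combinatorial elements. *)

(* Defs.v *)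
From HB Require Import structures.
From mathcomp Require Import all_boot all_order all_algebra.
From mathcomp Require Import finmap.
From mathcomp Require Import boolp.
Set Implicit Arguments. Unset Strict Implicit. Unset Printing Implicit Defensive.
Import GRing.Theory.
Local Open Scope ring_scope.

(* A (small) category: objects, arrows, source/target, identities and a
   composition [comp g f] = g \o f, meaningful when [tgt f = src g]. *)
Record category := Category {
  Obj : Type;
  Arr : choiceType;
  src : Arr -> Obj;
  tgt : Arr -> Obj;
  idc : Obj -> Arr;
  comp : Arr -> Arr -> Arr;
  src_id : forall x, src (idc x) = x;
  tgt_id : forall x, tgt (idc x) = x;
  src_comp : forall f g, tgt f = src g -> src (comp g f) = src f;
  tgt_comp : forall f g, tgt f = src g -> tgt (comp g f) = tgt g;
  comp_id_r : forall f, comp f (idc (src f)) = f;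
  comp_id_l : forall f, comp (idc (tgt f)) f = f;
  compA : forall f g h, tgt f = src g -> tgt g = src h ->
    comp h (comp g f) = comp (comp h g) f
}.

Section Defs.
Variable C : category.
Local Notation A := (Arr C).

Definition is_id (f : A) : Prop := exists x, f = idc x.

Fixpoint chain (s : seq A) : Prop :=
  match s with
  | a :: ((b :: _) as t) => tgt a = src b /\ chain t
  | _ => True
  end.

(* composite a_k \o ... \o a_1 of the list [:: a_1; ...; a_k] (k >= 1) *)
Definition composite (a : A) (t : seq A) : A := foldl (fun acc b => comp b acc) a t.

Definition factorisation (f : A) (s : seq A) : Prop :=
  (forall a, a \in s -> ~ is_id a) /\
  match s with
  | [::] => is_id f
  | a :: t => chain s /\ composite a t = f
  end.

(* Leroux's Moebius condition: finitely many factorisations of every arrow *)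
Definition moebius : Prop :=
  forall f : A, exists L : seq (seq A), forall s, factorisation f s -> s \in L.

(* l(f) <= n  (l(f) = maximal length of a factorisation) *)
Definition len_le (f : A) (n : nat) : Prop :=
  forall s, factorisation f s -> (size s <= n)%N.

Definition len_eq (f : A) (n : nat) : Prop :=
  len_le f n /\ exists s, factorisation f s /\ size s = n.

Variable k : fieldType.

(* The incidence coalgebra C = k-vector space with basis the arrows, realised
   as finitely supported functions A -> k (coefficient of each arrow).
   C (x) C has basis the pairs (a,b) = a (x) b, realised as finitely
   supported functions A * A -> k. *)
Definition vec := {fsfun A -> k with 0}.
Definition vec2 := {fsfun (A * A)%type -> k with 0}.

Definition basis (f : A) : A -> k := fun a => if a == f then 1 else 0.

(* comultiplication, coefficientwise: Delta(v) = sum_f v(f) sum_{b o a = f} a (x) b,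
   so the coefficient of a (x) b is v(b o a) if a, b are composable, else 0 *)
Definition Delta (v : A -> k) : A * A -> k :=
  fun p => if `[< tgt p.1 = src p.2 >] then v (comp p.2 p.1) else 0.

Definition eps (v : vec) : k :=
  \sum_(f <- finsupp v) v f * (if `[< is_id f >] then 1 else 0).

Definition inCle (v : vec) (n : nat) : Prop := forall f, v f != 0 -> len_le f n.
Definition inCeq (v : vec) (n : nat) : Prop := forall f, v f != 0 -> len_eq f n.

Definition proj (i j : nat) (w : A * A -> k) : A * A -> k :=
  fun p => if `[< len_eq p.1 i /\ len_eq p.2 j >] then w p else 0.

End Defs.

(* Main.v *)
Require Import Defs.
From HB Require Import structures.
From mathcomp Require Import all_boot all_order all_algebra.
From mathcomp Require Import finmap.
From mathcomp Require Import boolp.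
From mathcomp Require Import zify.
Import GRing.Theory.
Local Open Scope ring_scope.
Import Defs.
Set Implicit Arguments. Unset Strict Implicit.
Lemma chain_cons2 {C : category} (a b : Arr C) t :
  chain [:: a, b & t] <-> tgt a = src b /\ chain (b :: t).
Proof. by case: t. Qed.

Lemma composite_cons {C : category} (a b : Arr C) t :
  composite a (b :: t) = composite (comp b a) t.
Proof. by []. Qed.

Lemma chain_repl {C : category} (b c : Arr C) t :
  chain (b :: t) -> tgt c = tgt b -> chain (c :: t).
Proof. by case: t => // d t /chain_cons2 [H1 H2] E; apply/chain_cons2; rewrite E. Qed.

Lemma chain_tail {C : category} (b : Arr C) t : chain (b :: t) -> chain t.
Proof. by case: t => //= d t []. Qed.

Lemma composite_src_tgt {C : category} t (a : Arr C) : chain (a :: t) ->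
  src (composite a t) = src a /\ tgt (composite a t) = tgt (last a t).
Proof.
elim: t a => [|b t IH] a // /chain_cons2 [E Hc]; rewrite composite_cons.
have Hc' : chain (comp b a :: t) by apply: (chain_repl Hc); rewrite tgt_comp.
have [-> ->] := IH _ Hc'.
by rewrite src_comp //; case: t {IH Hc Hc'} => //= ; rewrite tgt_comp.
Qed.

Lemma composite_comp {C : category} t (b c : Arr C) : chain (b :: t) ->
  tgt c = src b -> composite (comp b c) t = comp (composite b t) c.
Proof.
elim: t b => [|d t IH] b // /chain_cons2 [E Hc] Ec; rewrite !composite_cons.
rewrite compA //; apply: IH.
  by apply: (chain_repl Hc); rewrite tgt_comp.
by rewrite src_comp.
Qed.

Lemma chain_cat {C : category} t1 t2 (a b : Arr C) : chain (a :: t1) -> chain (b :: t2) ->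
  tgt (last a t1) = src b -> chain (a :: t1 ++ b :: t2).
Proof.
elim: t1 a => [|c t1 IH] a /=; first by move=> _ H E; split.
by move=> /chain_cons2 [E Hc] Hb El; apply/chain_cons2; split => //; apply: IH.
Qed.

Lemma fact_cat {C : category} (f1 f2 : Arr C) a t1 b t2 :
  factorisation f1 (a :: t1) -> factorisation f2 (b :: t2) -> tgt f1 = src f2 ->
  factorisation (comp f2 f1) ((a :: t1) ++ (b :: t2)).
Proof.
move=> [N1 [H1 E1]] [N2 [H2 E2]] E; split.
  by move=> x; rewrite mem_cat => /orP[/N1|/N2].
have [Es1 Et1] := composite_src_tgt H1; have [Es2 Et2] := composite_src_tgt H2.
rewrite E1 in Es1 Et1; rewrite E2 in Es2 Et2.
have Hc : chain (a :: t1 ++ b :: t2).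
  by apply: chain_cat => //; rewrite -Et1 -Es2.
split => //; rewrite /composite foldl_cat /= -/(composite _ _) -/(composite _ _).
rewrite composite_comp //; first by rewrite -E1 -E2.
by rewrite -E1 in E; exact: (etrans E Es2).
Qed.
Lemma ex_max_prop (P : nat -> Prop) b : (exists i, P i) -> (forall i, P i -> (i <= b)%N) ->
  exists m, P m /\ forall i, P i -> (i <= m)%N.
Proof.
elim: b => [|b IH] [i Pi] Hb.
  by exists 0%N; split; [have := Hb _ Pi; rewrite leqn0 => /eqP <- | move=> j /Hb].
case: (pselect (P b.+1)) => [Pb|nPb]; first by exists b.+1.
apply: IH; first by exists i.
move=> j Pj; have := Hb _ Pj; rewrite leq_eqVlt => /orP[/eqP E|//].
by rewrite E in Pj.
Qed.

Lemma fact_bounded {C : category} (HC : moebius C) (f : Arr C) :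
  exists B, forall s, factorisation f s -> (size s <= B)%N.
Proof.
have [L HL] := HC f; exists (\max_(s <- L) size s) => s /HL Hs.
exact: (@leq_bigmax_seq _ L xpredT size s Hs).
Qed.

Lemma comp_idid {C : category} (x : Obj C) : comp (idc x) (idc x) = idc x.
Proof. by have := comp_id_r (idc x); rewrite src_id. Qed.

Lemma id_nofact {C : category} (HC : moebius C) (x : Obj C) s :
  factorisation (idc x) s -> s = [::].
Proof.
case: s => // a t Hf; exfalso.
have [B HB] := fact_bounded HC (idc x).
have H : forall m, exists s', factorisation (idc x) s' /\ (m < size s')%N.
  elim => [|m [s' [Hs' Hm]]]; first by exists (a :: t).
  case: s' Hs' Hm => // b t2 Hs' Hm; exists ((a :: t) ++ (b :: t2)); split.
    by have := fact_cat Hf Hs'; rewrite tgt_id src_id comp_idid => /(_ erefl).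
  by rewrite size_cat /=; move: Hm => /=; lia.
have [s' [/HB Hle Hlt]] := H B.
by rewrite ltnNge Hle in Hlt.
Qed.

Lemma nonid_fact {C : category} (f : Arr C) : ~ is_id f -> factorisation f [:: f].
Proof. by move=> Hf; split => // a; rewrite inE => /eqP ->. Qed.

Lemma len0_id {C : category} (HC : moebius C) (f : Arr C) : len_eq f 0 <-> is_id f.
Proof.
split.
  by move=> [_ [s [Hs /eqP]]]; rewrite size_eq0 => /eqP E; subst s; case: Hs.
move=> Hid; split.
  by move=> s Hs; case: Hid Hs => x -> /(id_nofact HC) ->.
by exists [::]; split => //; split => // a; rewrite in_nil.
Qed.

Lemma ex_len {C : category} (HC : moebius C) (f : Arr C) : exists n, len_eq f n.
Proof.
have [B HB] := fact_bounded HC f.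
have [m [[s [Hs Hsz]] Hmax]] :
  exists m, (exists s, factorisation f s /\ size s = m) /\
    forall i, (exists s, factorisation f s /\ size s = i) -> (i <= m)%N.
  apply: (@ex_max_prop _ B).
    case: (pselect (is_id f)) => Hid.
      by exists 0%N, [::]; split => //; split => // a; rewrite in_nil.
    by exists 1%N, [:: f]; split => //; apply: nonid_fact.
  by move=> i [s [/HB Hs <-]].
exists m; split; last by exists s.
by move=> s' Hs'; apply: Hmax; exists s'.
Qed.

Lemma len_uniq {C : category} (f : Arr C) i j : len_eq f i -> len_eq f j -> i = j.
Proof.
move=> [Hi [s [Hs Es]]] [Hj [s' [Hs' Es']]].
apply/eqP; rewrite eqn_leq; apply/andP; split; [rewrite -Es; exact: Hj | rewrite -Es'; exact: Hi].
Qed.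

Lemma len_split {C : category} (a b f : Arr C) n i : tgt a = src b -> comp b a = f ->
  len_eq a i -> len_le f n -> len_le b (n - i).
Proof.
move=> Eab Ef [Hi [sa [Ha Hsz]]] Hf s Hs.
case: sa Ha Hsz => [|a1 ta] Ha Hsz.
  subst i; case: Ha => _ [x Ea]; subst a.
  rewrite tgt_id in Eab; subst x; rewrite comp_id_r in Ef; subst f.
  by rewrite subn0; apply: Hf.
case: s Hs => [|b1 tb] Hs; first by [].
have := fact_cat Ha Hs Eab; rewrite Ef => /Hf; rewrite size_cat -Hsz.
move=> H; apply/leP; move/leP: H; lia.
Qed.

Lemma comp_eq_id {C : category} (HC : moebius C) (a b : Arr C) (x : Obj C) :
  tgt a = src b -> comp b a = idc x -> a = idc x /\ b = idc x.
Proof.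
move=> Eab Ef.
case: (pselect (is_id a)) => [[y Ea]|Na].
  subst a; rewrite tgt_id in Eab; subst y; rewrite comp_id_r in Ef; subst b.
  by rewrite src_id.
case: (pselect (is_id b)) => [[y Eb]|Nb].
  subst b; rewrite src_id in Eab; subst y; rewrite comp_id_l in Ef; subst a.
  by rewrite tgt_id.
have := fact_cat (nonid_fact Na) (nonid_fact Nb) Eab; rewrite Ef.
by move/(id_nofact HC).
Qed.
Definition mkvec (k : fieldType) (T : choiceType) (S : seq T) (g : T -> k)
  : {fsfun T -> k with 0} := [fsfun x in seq_fset tt S => g x].

Lemma mkvecE (k : fieldType) (T : choiceType) (S : seq T) (g : T -> k) :
  (forall x, g x != 0 -> x \in S) -> forall x, mkvec S g x = g x.
Proof.
move=> HS x; rewrite /mkvec fsfun_fun seq_fsetE.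
case: ifP => // H; case: (eqVneq (g x) 0) => [->//|/HS]; by rewrite H.
Qed.

Lemma len_le_mono {C : category} (f : Arr C) m n : len_le f m -> (m <= n)%N -> len_le f n.
Proof. by move=> H Hmn s /H Hs; apply: leq_trans Hmn. Qed.

Lemma len_le_left {C : category} (a b f : Arr C) n i : tgt a = src b -> comp b a = f ->
  len_eq a i -> len_le f n -> (i <= n)%N.
Proof.
move=> Eab Ef [Hi [sa [Ha Hsz]]] Hf.
case: sa Ha Hsz => [|a1 ta] Ha Hsz; first by rewrite -Hsz.
case: (pselect (is_id b)) => [[y Eb]|Nb].
  subst b; rewrite src_id in Eab; subst y; rewrite comp_id_l in Ef; subst f.
  by rewrite -Hsz; apply: Hf.
have := fact_cat Ha (nonid_fact Nb) Eab; rewrite Ef => /Hf; rewrite size_cat -Hsz /=.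
move=> H; apply/leP; move/leP: H; lia.
Qed.

Lemma delta_supp1 {C : category} (HC : moebius C) (f : Arr C) :
  exists S : seq (Arr C * Arr C), forall a b, tgt a = src b -> comp b a = f -> (a, b) \in S.
Proof.
have [L HL] := HC f.
exists [:: (idc (src f), f), (f, idc (tgt f)) & [seq (nth f s 0, nth f s 1) | s <- L]].
move=> a b Eab Ef.
case: (pselect (is_id a)) => [[y Ea]|Na].
  subst a; rewrite tgt_id in Eab; subst y; rewrite comp_id_r in Ef; subst f.
  by rewrite inE eqxx.
case: (pselect (is_id b)) => [[y Eb]|Nb].
  subst b; rewrite src_id in Eab; subst y; rewrite comp_id_l in Ef; subst f.
  by rewrite !inE eqxx orbT.
have := fact_cat (nonid_fact Na) (nonid_fact Nb) Eab; rewrite Ef => /HL HaL.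
by rewrite !inE; apply/orP; right; apply/orP; right; apply: (map_f _ HaL).
Qed.

Lemma delta_supp_seq {C : category} (HC : moebius C) (r : seq (Arr C)) :
  exists S : seq (Arr C * Arr C), forall a b, tgt a = src b -> comp b a \in r -> (a, b) \in S.
Proof.
elim: r => [|f r [S HS]]; first by exists [::].
have [S1 HS1] := delta_supp1 HC f.
exists (S1 ++ S) => a b E; rewrite inE mem_cat => /orP[/eqP Ef|Hr].
  by rewrite (HS1 _ _ E Ef).
by rewrite (HS _ _ E Hr) orbT.
Qed.

Lemma delta_supp {C : category} (HC : moebius C) (k : fieldType) (v : vec C k) :
  exists S : seq (Arr C * Arr C), forall p, Delta v p != 0 -> p \in S.
Proof.
have [S HS] := delta_supp_seq HC (finsupp v).
exists S => [[a b]]; rewrite /Delta /=; case: asboolP => [E Hv|_]; last by rewrite eqxx.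
by apply: (HS a b E); rewrite mem_finsupp.
Qed.

Lemma bound_seq {C : category} (HC : moebius C) (r : seq (Arr C)) :
  exists n, forall f, f \in r -> len_le f n.
Proof.
elim: r => [|f r [n Hn]]; first by exists 0%N.
have [m [Hm _]] := ex_len HC f.
exists (maxn m n) => g; rewrite inE => /orP[/eqP ->|/Hn H].
  by apply: len_le_mono Hm _; rewrite leq_maxl.
by apply: len_le_mono H _; rewrite leq_maxr.
Qed.
Lemma part3 (k : fieldType) (C : category) (HC : moebius C) :
  (forall (n : nat) (v : vec C k), inCle v n ->
     exists w : 'I_n.+1 -> vec2 C k,
       (forall (i : 'I_n.+1) (p : (Arr C * Arr C)%type), w i p != 0 ->
          len_le p.1 i /\ len_le p.2 (n - i)) /\
       (forall p, Delta v p = \sum_(i < n.+1) w i p)).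
Proof.
move=> n v Hv.
have [S HS] := delta_supp HC v.
pose g (i : nat) := fun p : (Arr C * Arr C) => if `[< len_eq p.1 i >] then Delta v p else 0.
have Hg : forall i p, g i p != 0 -> p \in S.
  move=> i p; rewrite /g; case: ifP => [_|_]; [exact: HS| by rewrite eqxx].
exists (fun i => mkvec S (g i)); split.
  move=> i [a b]; rewrite mkvecE; last exact: Hg.
  rewrite /g /Delta /=; case: asboolP => [Ha|_]; last by rewrite eqxx.
  case: asboolP => [E Hv0|_]; last by rewrite eqxx.
  split; first by case: Ha.
  exact: (len_split E erefl Ha (Hv _ Hv0)).
move=> [a b].
rewrite (eq_bigr (fun i : 'I_n.+1 => g i (a, b))); last by move=> i _; rewrite mkvecE //; exact: Hg.
case: (eqVneq (Delta v (a, b)) 0) => [D0|D0].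
  by rewrite D0 big1 // => i _; rewrite /g D0; case: ifP.
have [m Hm] := ex_len HC a.
have Hmn : (m < n.+1)%N.
  move: D0; rewrite /Delta /=; case: asboolP => [E Hv0|_]; last by rewrite eqxx.
  exact: (len_le_left E erefl Hm (Hv _ Hv0)).
rewrite (bigD1 (Ordinal Hmn)) //= big1 ?addr0.
  by rewrite /g /=; case: asboolP.
move=> j Hj; rewrite /g; case: asboolP => // Hjm.
by move: Hj; rewrite -val_eqE /= (len_uniq Hjm Hm) eqxx.
Qed.

Lemma part1 (k : fieldType) (C : category) (HC : moebius C) (v : vec C k) :
  exists n, inCle v n.
Proof.
have [n Hn] := bound_seq HC (finsupp v).
by exists n => f Hf; apply: Hn; rewrite mem_finsupp.
Qed.

Lemma part4 (k : fieldType) (C : category) (HC : moebius C) (n : nat) : (0 < n)%N ->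
     (forall v : vec C k, inCle v n <->
        exists u w : vec C k, inCle u n.-1 /\ inCeq w n /\ forall f, v f = u f + w f) /\
     (forall v : vec C k, inCle v n.-1 -> inCeq v n -> forall f, v f = 0).
Proof.
move=> n0; split.
  move=> v; split.
    move=> Hv.
    have Hs : forall (b : bool) f,
        (if b then v f else 0) != 0 -> f \in finsupp v.
      by move=> b f; case: ifP => _; [rewrite mem_finsupp | rewrite eqxx].
    exists (mkvec (finsupp v) (fun f => if `[< len_le f n.-1 >] then v f else 0)).
    exists (mkvec (finsupp v) (fun f => if ~~ `[< len_le f n.-1 >] then v f else 0)).
    split; [|split].
    - move=> f; rewrite mkvecE; last by move=> x; apply: Hs.
      by case: asboolP => // _; rewrite eqxx.
    - move=> f; rewrite mkvecE; last by move=> x; apply: Hs.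
      case: asboolP => /= [_ Hf|Hn Hf]; first by rewrite eqxx in Hf.
      have [m Hm] := ex_len HC f.
      have Hmn : (m <= n)%N by case: Hm => _ [s [/(Hv _ Hf) Hs' <-]].
      suff -> : n = m by [].
      apply/eqP; rewrite eqn_leq Hmn andbT leqNgt; apply/negP => Hlt.
      by apply: Hn; apply: (len_le_mono (proj1 Hm)); move: Hlt n0 => /leP ? /leP ?; apply/leP; lia.
    - move=> f; rewrite !mkvecE; try by move=> x; apply: Hs.
      by case: asboolP => _ /=; rewrite ?addr0 ?add0r.
  move=> [u [w [Hu [Hw Huw]]]] f; rewrite Huw => Hf.
  case: (eqVneq (u f) 0) => [Hu0|/Hu Hl].
    rewrite Hu0 add0r in Hf; exact: (proj1 (Hw _ Hf)).
  by apply: (len_le_mono Hl); apply: leq_pred.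
move=> v Hv Hw f; apply/eqP; apply/negP => /negP Hf.
have [_ [s [Hs Hsz]]] := Hw _ Hf.
have := Hv _ Hf _ Hs; rewrite Hsz => H.
by move: H n0 => /leP ? /leP ?; lia.
Qed.

Lemma part5 (k : fieldType) (C : category) (HC : moebius C) :
  (forall (n : nat) (v : vec C k), (0 < n)%N -> inCeq v n -> eps v = 0).
Proof.
move=> n v n0 Hv; rewrite /eps big_seq big1 // => f; rewrite mem_finsupp => /Hv Hf.
case: asboolP => [Hid|_]; last by rewrite mulr0.
have := len_uniq Hf (proj2 (len0_id HC f) Hid) => E.
by rewrite E in n0.
Qed.

Lemma part6 (k : fieldType) (C : category) (HC : moebius C) :
  (forall v : vec C k, inCle v 0 <-> forall f, v f != 0 -> is_id f).
Proof.
move=> v; split.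
  move=> Hv f /Hv Hf; case: (pselect (is_id f)) => // Nf.
  by have := Hf _ (nonid_fact Nf).
move=> H f /H Hf; exact: (proj1 (proj2 (len0_id HC f) Hf)).
Qed.

Lemma part7 (k : fieldType) (C : category) (HC : moebius C) :
  (forall x : Obj C,
     basis k (idc x) <> (fun _ => 0) /\
     Delta (basis k (idc x)) = (fun p => basis k (idc x) p.1 * basis k (idc x) p.2)).
Proof.
move=> x; split.
  move=> /(congr1 (fun g => g (idc x))); rewrite /basis eqxx => /eqP.
  by rewrite oner_eq0.
apply: funext => -[a b]; rewrite /Delta /basis /=.
case: asboolP => [E|NE].
  case: (eqVneq (comp b a) (idc x)) => [Ec|Ec].
    by have [-> ->] := comp_eq_id HC E Ec; rewrite eqxx mulr1.
  case: eqP => Ea; case: eqP => Eb; rewrite ?mulr0 ?mul0r //.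
  by subst; rewrite comp_idid eqxx in Ec.
case: eqP => Ea; case: eqP => Eb; rewrite ?mulr0 ?mul0r //.
by subst; rewrite tgt_id src_id in NE.
Qed.

Lemma part8 (k : fieldType) (C : category) (HC : moebius C) :
  (forall (f : Arr C) (n : nat), len_eq f n ->
     proj 0 n (Delta (basis k f)) = (fun p => basis k (idc (src f)) p.1 * basis k f p.2) /\
     proj n 0 (Delta (basis k f)) = (fun p => basis k f p.1 * basis k (idc (tgt f)) p.2)).
Proof.
move=> f n Hf; split; apply: funext => -[a b]; rewrite /proj /Delta /basis /=.
- case: asboolP => [[Ha Hb]|Hn].
    have [y Ey] := proj1 (len0_id HC a) Ha; subst a.
    case: asboolP => [E|NE].
      rewrite tgt_id in E; subst y; rewrite comp_id_r.
      by case: eqP => Eb; rewrite ?mulr1 ?mulr0 // Eb eqxx.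
    case: eqP => Ea; case: eqP => Eb; rewrite ?mulr0 ?mul0r //.
    subst b; exfalso; apply: NE; rewrite tgt_id.
    by have := congr1 (@src C) Ea; rewrite !src_id => ->.
  case: eqP => Ea; case: eqP => Eb; rewrite ?mulr0 ?mul0r //.
  subst; exfalso; apply: Hn; split => //.
  by apply/(len0_id HC); exists (src f).
- case: asboolP => [[Ha Hb]|Hn].
    have [y Ey] := proj1 (len0_id HC b) Hb; subst b.
    case: asboolP => [E|NE].
      rewrite src_id in E; subst y; rewrite comp_id_l.
      by case: eqP => Ea; rewrite ?mul1r ?mul0r // Ea eqxx.
    case: eqP => Ea; case: eqP => Eb; rewrite ?mulr0 ?mul0r //.
    subst a; exfalso; apply: NE; rewrite src_id.
    by have := congr1 (@tgt C) Eb; rewrite !tgt_id => ->.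
  case: eqP => Ea; case: eqP => Eb; rewrite ?mulr0 ?mul0r //.
  subst; exfalso; apply: Hn; split => //.
  by apply/(len0_id HC); exists (tgt f).
Qed.

Theorem proposition6p3 (k : fieldType) (C : category) (HC : moebius C) :
  (* the C_n exhaust C *)
  (forall v : vec C k, exists n, inCle v n) /\
  (* C_0 \subset C_1 \subset ... *)
  (forall (v : vec C k) n, inCle v n -> inCle v n.+1) /\
  (* Delta(C_n) \subset sum_{i+j=n} C_i (x) C_j *)
  (forall (n : nat) (v : vec C k), inCle v n ->
     exists w : 'I_n.+1 -> vec2 C k,
       (forall (i : 'I_n.+1) (p : (Arr C * Arr C)%type), w i p != 0 ->
          len_le p.1 i /\ len_le p.2 (n - i)) /\
       (forall p, Delta v p = \sum_(i < n.+1) w i p)) /\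
  (* C_n = C_{n-1} (+) C(n) for n >= 1 *)
  (forall n : nat, (0 < n)%N ->
     (forall v : vec C k, inCle v n <->
        exists u w : vec C k, inCle u n.-1 /\ inCeq w n /\ forall f, v f = u f + w f) /\
     (forall v : vec C k, inCle v n.-1 -> inCeq v n -> forall f, v f = 0)) /\
  (* C(n) \subset Ker eps for n >= 1 *)
  (forall (n : nat) (v : vec C k), (0 < n)%N -> inCeq v n -> eps v = 0) /\
  (* C_0 is spanned by the identity arrows *)
  (forall v : vec C k, inCle v 0 <-> forall f, v f != 0 -> is_id f) /\
  (* identity arrows are group-like *)
  (forall x : Obj C,
     basis k (idc x) <> (fun _ => 0) /\
     Delta (basis k (idc x)) = (fun p => basis k (idc x) p.1 * basis k (idc x) p.2)) /\
  (* (0,n)- and (n,0)-components of Delta(f) for f : x -> y with l(f) = n *)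
  (forall (f : Arr C) (n : nat), len_eq f n ->
     proj 0 n (Delta (basis k f)) = (fun p => basis k (idc (src f)) p.1 * basis k f p.2) /\
     proj n 0 (Delta (basis k f)) = (fun p => basis k f p.1 * basis k (idc (tgt f)) p.2)).
Proof.
split; first exact: part1.
split; first by move=> v n Hv f /Hv H; apply: (len_le_mono H).
split; first exact: part3.
split; first exact: part4.
split; first exact: part5.
split; first exact: part6.
split; first exact: part7.
exact: part8.
Qed.
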